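(* Let $f$ be a homeomorphism of a compact metric space $(X,d)$ and let $\mu$ be a Borel measure on $X$ with $\mu(X)>0$. If $x\in X$ is a $\mu$-uniformly expansive point of $f$, then $x$ is a $\mu$-topologically stable point of $f$. Moreover, if $x$ is also a $\mu$-shadowable point of $f$, then $x$ is a strong $\mu$-topologically stable point of $f$.
   Context: $B(x,\epsilon)$ and $B[x,\epsilon]$ are the open and closed balls; $\mathcal{O}_g(x)=\{g^n(x):n\in\mathbb{Z}\}$; $d_{C^0}(f,g)=\sup_x d(f(x),g(x))$. For a point $x$, $\mathfrak{c}>0$ and $z\in B(x,\mathfrak{c})$, $\Gamma^{\mathfrak{c}}_f(z)=\{y\in B(x,\mathfrak{c}): d(f^n(y),f^n(z))\le\mathfrak{c}\ \forall n\in\mathbb{Z}\}$; $x$ is a $\mu$-uniformly expansive point of $f$ if there is $\mathfrak{c}>0$ with $\mu(\Gamma^{\mathfrak{c}}_f(z))=0$ for every $z\in B(x,\mathfrak{c})$. A $\delta$-pseudo orbit for $f$ is $\{x_n\}_{n\in\mathbb{Z}}$ with $d(f(x_n),x_{n+1})<\delta$ for all $n$; it is through a set $B$ if $x_0\in B$; it is $\epsilon$-traced if there is $y$ with $d(f^n(y),x_n)<\epsilon$ for all $n$. $x$ is $\mu$-shadowable if for every $\epsilon>0$ there are $\delta>0$ and a Borel set $B$ with $\mu(X\setminus B)=0$ such that every $\delta$-pseudo orbit through $B\cap B(x,\delta)$ is $\epsilon$-traced by some point of $X$. For $Z\subset X$, a set-valued map $H:Z\to 2^X$ has domain $Dom(H)=\{z:H(z)\ne\emptyset\}$;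 it is compact valued if each $H(z)$ is compact; $d(H,Id)\le\epsilon$ means $H(z)\subset B[z,\epsilon]$ for all $z$; it is upper semi-continuous if for each $z\in Dom(H)$ and open $O\supset H(z)$ there is $\gamma>0$ with $H(w)\subset O$ whenever $w\in Z$, $d(w,z)<\gamma$; $f\circ H=H\circ g$ means $f(H(z))=H(g(z))$ for all $z$. $x$ is a $\mu$-topologically stable point of $f$ if for every $\epsilon>0$ there is $\delta>0$ such that for every homeomorphism $g$ of $X$ with $d_{C^0}(f,g)\le\delta$ there is an upper semi-continuous compact valued $H:\overline{\mathcal{O}_g(x)}\to 2^X$ with measurable domain such that (i) $\mu(H(z))=0$ for each $z\in B(x,\delta/4)\cap\overline{\mathcal{O}_g(x)}$, (ii) $d(H,Id)\le\epsilon$, (iii) $f\circ H=H\circ g$. $x$ is strong $\mu$-topologically stable if moreover (for the given $\epsilon$, together with $\delta$) there is a Borel set $B$ with $\mu(X\setminus B)=0$ such that additionally (iv) $\mu(X\setminus Dom(H))\le\mu(X\setminus U)$ with $U=B\cap B(x,\delta)\cap\overline{\mathcal{O}_g(x)}$. *)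

(* Defs.v *)
(* A compact metric space is given concretely by a
   carrier type X (which also carries a measurable structure) and a real-valued
   metric [dist]; the sigma-algebra of X is required to be the Borel one. *)
From HB Require Import structures.
From mathcomp Require Import all_boot all_order all_algebra.
From mathcomp Require Import all_classical all_reals.
From mathcomp Require Import measure.
Set Implicit Arguments. Unset Strict Implicit. Unset Printing Implicit Defensive.
Import Order.TTheory GRing.Theory Num.Theory.
Local Open Scope classical_set_scope.
Local Open Scope ring_scope.

Section MetricDefs.
Context {R : realType} {X : Type} (dist : X -> X -> R).

Definition is_metric : Prop :=
  [/\ forall x y, 0 <= dist x y,
      forall x y, dist x y = 0 <-> x = y,
      forall x y, dist x y = dist y x &
      forall x y z, dist x z <= dist x y + dist y z].

Definition oball (x : X) (e : R) : set X := [set y | dist x y < e].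
Definition cball (x : X) (e : R) : set X := [set y | dist x y <= e].

Definition dopen (A : set X) : Prop :=
  forall x, A x -> exists2 e : R, 0 < e & oball x e `<=` A.

Definition dclosure (A : set X) : set X :=
  [set y | forall e : R, 0 < e -> exists2 a, A a & dist y a < e].

Definition dcompact (A : set X) : Prop :=
  forall (I : Type) (U : I -> set X), (forall i, dopen (U i)) ->
    A `<=` \bigcup_(i in [set: I]) U i ->
    exists2 F : set I, finite_set F & A `<=` \bigcup_(i in F) U i.

Definition dcont (g : X -> X) : Prop :=
  forall x (e : R), 0 < e -> exists2 del : R, 0 < del &
    forall y, dist x y < del -> dist (g x) (g y) < e.

Definition is_homeo (g ginv : X -> X) : Prop :=
  [/\ cancel g ginv, cancel ginv g, dcont g & dcont ginv].

Definition iterz (g ginv : X -> X) (n : int) (x : X) : X :=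
  match n with
  | Posz k => iter k g x
  | Negz k => iter k.+1 ginv x
  end.

Definition orbit (g ginv : X -> X) (x : X) : set X :=
  [set y | exists n : int, y = iterz g ginv n x].

End MetricDefs.

Section MeasureDefs.
Context {R : realType} {d0 : measure_display} {X : measurableType d0}
  (dist : X -> X -> R) (mu : {measure set X -> \bar R}).

Definition is_borel : Prop := @measurable d0 X = <<s dopen dist >>.

Definition Gamma (f finv : X -> X) (x : X) (c : R) (z : X) : set X :=
  [set y | oball dist x c y /\
           forall n : int, dist (iterz f finv n y) (iterz f finv n z) <= c].

Definition unif_expansive_pt (f finv : X -> X) (x : X) : Prop :=
  exists2 c : R, 0 < c &
    forall z, oball dist x c z -> mu (Gamma f finv x c z) = 0%E.

Definition pseudo_orbit (f : X -> X) (del : R) (xs : int -> X) : Prop :=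
  forall n : int, dist (f (xs n)) (xs (n + 1)) < del.

Definition traced (f finv : X -> X) (e : R) (xs : int -> X) : Prop :=
  exists y, forall n : int, dist (iterz f finv n y) (xs n) < e.

Definition shadowable_pt (f finv : X -> X) (x : X) : Prop :=
  forall e : R, 0 < e -> exists2 del : R, 0 < del &
    exists B : set X, [/\ measurable B, mu (~` B) = 0%E &
      forall xs : int -> X, pseudo_orbit f del xs ->
        (B `&` oball dist x del) (xs 0) -> traced f finv e xs].

(* Properties of H : Z -> 2^X (represented as H : X -> set X restricted to Z) *)
Definition dom (Z : set X) (H : X -> set X) : set X :=
  [set z | Z z /\ H z !=set0].

Definition usc (Z : set X) (H : X -> set X) : Prop :=
  forall z, dom Z H z -> forall O : set X, dopen dist O -> H z `<=` O ->
    exists2 gam : R, 0 < gam &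
      forall w, Z w -> dist w z < gam -> H w `<=` O.

Definition compact_valued (Z : set X) (H : X -> set X) : Prop :=
  forall z, Z z -> dcompact dist (H z).

Definition stab_H (f g ginv : X -> X) (x : X) (e del : R) (H : X -> set X)
  : Prop :=
  let Z := dclosure dist (orbit g ginv x) in
  [/\ usc Z H /\ compact_valued Z H, measurable (dom Z H),
      (forall z, (oball dist x (del / 4) `&` Z) z -> mu (H z) = 0%E),
      (forall z, Z z -> H z `<=` cball dist z e) &
      (forall z, Z z -> f @` H z = H (g z))].

Definition top_stable_pt (f : X -> X) (x : X) : Prop :=
  forall e : R, 0 < e -> exists2 del : R, 0 < del &
    forall g ginv : X -> X, is_homeo dist g ginv ->
      (forall y, dist (f y) (g y) <= del) ->
      exists H : X -> set X, stab_H f g ginv x e del H.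

Definition strong_top_stable_pt (f : X -> X) (x : X) : Prop :=
  forall e : R, 0 < e -> exists2 del : R, 0 < del &
    exists B : set X, [/\ measurable B, mu (~` B) = 0%E &
      forall g ginv : X -> X, is_homeo dist g ginv ->
        (forall y, dist (f y) (g y) <= del) ->
        exists H : X -> set X, stab_H f g ginv x e del H /\
          let Z := dclosure dist (orbit g ginv x) in
          (mu (~` dom Z H) <= mu (~` (B `&` oball dist x del `&` Z)))%E].

End MeasureDefs.

(* Main.v *)
Require Import Defs.
From HB Require Import structures.
From mathcomp Require Import all_boot all_order all_algebra.
From mathcomp Require Import all_classical all_reals.
From mathcomp Require Import measure.
From mathcomp Require Import ring lra zify.
Import Order.TTheory GRing.Theory Num.Theory.
Local Open Scope classical_set_scope.
Local Open Scope ring_scope.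

Section Metric.
Context {R : realType} {X : Type} (dist : X -> X -> R) (hm : is_metric dist).

Lemma d_ge0 a b : 0 <= dist a b. Proof. by case: hm. Qed.
Lemma d_sym a b : dist a b = dist b a. Proof. by case: hm. Qed.
Lemma d_tri a b c : dist a c <= dist a b + dist b c. Proof. by case: hm. Qed.
Lemma d_refl a : dist a a = 0. Proof. by case: hm => _ h _ _; apply/h. Qed.

Lemma oball_open a r : dopen dist (oball dist a r).
Proof.
move=> p hp; exists (r - dist a p); first by rewrite subr_gt0.
move=> q hq; rewrite /oball /= in hp hq *.
have := d_tri a p q; move=> ?; lra.
Qed.

Lemma dcont_id : dcont dist id.
Proof. by move=> p e he; exists e. Qed.

Lemma dcont_comp {g h} : dcont dist g -> dcont dist h -> dcont dist (g \o h).
Proof.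
move=> cg ch p e he; have [d1 hd1 H1] := cg (h p) e he.
have [d2 hd2 H2] := ch p d1 hd1; exists d2 => // q hq /=; exact/H1/H2.
Qed.

Lemma dcont_iter g k : dcont dist g -> dcont dist (iter k g).
Proof.
move=> cg; elim: k => [|k IH] /=; first exact: dcont_id.
move=> p e he; have [d hd h] := dcont_comp cg IH p e he.
by exists d.
Qed.

Lemma dcont_iterz g ginv n : dcont dist g -> dcont dist ginv ->
  dcont dist (iterz g ginv n).
Proof. by move=> cg ci; case: n => k /=; apply: dcont_iter. Qed.

Lemma dclosure_closed A : dopen dist (~` dclosure dist A).
Proof.
move=> p /= /existsNP [e /not_implyP [he /forall2NP hn]].
exists (e / 2); first by rewrite divr_gt0.
move=> q /= hq hcl; have [a Aa hqa] := hcl (e/2) ltac:(by rewrite divr_gt0).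
have [//|h] := hn a; apply: h; rewrite /oball /= in hq; have := d_tri p q a; move=> ?; lra.
Qed.

Lemma closed_compact K : dcompact dist setT -> dopen dist (~` K) ->
  dcompact dist K.
Proof.
move=> cX oK I U oU cov.
have [[k0 Kk0]|nK] := pselect (exists k, K k); last first.
  by exists set0 => // p Kp; exfalso; apply: nK; exists p.
have [i0 _ _] := cov k0 Kk0.
have [||F fF hF] := cX I (fun i => U i `|` ~` K).
  move=> i p [Up|Kp].
    have [e he h] := oU i p Up; exists e => // q hq; left; exact: h.
  have [e he h] := oK p Kp; exists e => // q hq; right; exact: h.
  move=> p _; have [Kp|Kp] := pselect (K p).
    have [i _ h] := cov p Kp; exists i => //; by left.
  by exists i0 => //; right.
exists F => // p Kp; have [i Fi [h|h]] := hF p Logic.I; first by exists i.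
by [].
Qed.

Lemma min_pos_seq (s : seq R) : (forall r, r \in s -> 0 < r) ->
  exists2 g, 0 < g & forall r, r \in s -> g <= r.
Proof.
elim: s => [|a s IH] hs; first by exists 1.
have [|g hg H] := IH; first by move=> r rs; apply: hs; rewrite inE rs orbT.
exists (Order.min a g).
  by rewrite lt_min hg hs // inE eqxx.
move=> r; rewrite inE => /orP [/eqP ->|rs]; rewrite ge_min ?lexx //.
by rewrite H // orbT.
Qed.

Lemma min_pos (A : set R) : finite_set A -> (forall r, A r -> 0 < r) ->
  exists2 g, 0 < g & forall r, A r -> g <= r.
Proof.
move=> /finite_seqP [s ->] hA; apply: min_pos_seq => r rs; exact: hA.
Qed.

Section Key.
Context (cX : dcompact dist setT) (F G : int -> X -> X)
  (cF : forall n, dcont dist (F n)) (cG : forall n, dcont dist (G n)) (e : R).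

Lemma key z (O : set X) : dopen dist O ->
  (forall y, ~ O y -> exists n, e < dist (F n y) (G n z)) ->
  exists2 gam, 0 < gam & forall w, dist z w < gam ->
    forall y, ~ O y -> exists n, e < dist (F n y) (G n w).
Proof.
move=> oO hO.
have hc : forall y, exists t : int * R * R, [/\ 0 < t.1.2, 0 < t.2 &
  (~ O y -> (forall y', dist y y' < t.1.2 -> e + t.1.2 <= dist (F t.1.1 y') (G t.1.1 z)) /\
            (forall w, dist z w < t.2 -> dist (G t.1.1 z) (G t.1.1 w) < t.1.2))].
  move=> y; have [Oy|nOy] := pselect (O y).
    by exists (0, 1, 1) => /=; split.
  have [n hn] := hO y nOy.
  set eta := (dist (F n y) (G n z) - e) / 2.
  have heta : 0 < eta by rewrite divr_gt0 // subr_gt0.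
  have eeta : dist (F n y) (G n z) = e + 2 * eta by rewrite /eta; field.
  have [r1 hr1 H1] := cF n y eta heta.
  set r := Order.min r1 eta.
  have hr : 0 < r by rewrite lt_min hr1 heta.
  have [rr1 reta] : r <= r1 /\ r <= eta.
    by have := lexx r; rewrite {2}/r le_min => /andP.
  have [s hs H2] := cG n z r hr.
  exists (n, r, s); split => //= _; split => // y' hy'.
  have := H1 y' (lt_le_trans hy' rr1).
  have := d_tri (F n y) (F n y') (G n z).
  move=> ? ?; lra.
have [t ht] := choice hc.
pose U y := O `|` [set y' | ~ O y /\ dist y y' < (t y).1.2].
have [||Fs fF hF] := cX X U.
- move=> i p [Op|[nOi hp]].
    have [r hr h] := oO p Op; exists r => // q hq; left; exact: h.
  exists ((t i).1.2 - dist i p); first by rewrite subr_gt0.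
  move=> q hq; right; split => //; rewrite /oball /= in hq.
  have := d_tri i p q; move=> ?; lra.
- move=> p _; exists p => //; have [Op|nOp] := pselect (O p); first by left.
  right; split => //; rewrite d_refl; by case: (ht p).
have [||g hg Hg] := min_pos [set (t i).2 | i in Fs].
  exact: finite_image.
  by move=> r [i _ <-]; case: (ht i).
exists g => // w hw y nOy.
have [i Fi [//|[nOi hiy]]] := hF y Logic.I.
have [_ _ /(_ nOi) [h1 h2]] := ht i.
exists (t i).1.1.
have := h1 y hiy.
have := h2 w (lt_le_trans hw (Hg _ (ex_intro2 _ _ i Fi erefl))).
have := d_tri (F (t i).1.1 y) (G (t i).1.1 w) (G (t i).1.1 z).
rewrite (d_sym (G (t i).1.1 w)).
move=> ? ? ?; lra.
Qed.

End Key.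
End Metric.

Section Iter.
Context {X : Type} (g ginv : X -> X) (c1 : cancel g ginv) (c2 : cancel ginv g).
Lemma int_S k : (Posz k + 1 = Posz k.+1)%R. Proof. lia. Qed.
Lemma int_N0 : (Negz 0 + 1 = 0)%R. Proof. rewrite NegzE. lia. Qed.
Lemma int_NS k : (Negz k.+1 + 1 = Negz k)%R. Proof. rewrite !NegzE. lia. Qed.

Lemma iterzS n z : iterz g ginv (n + 1) z = iterz g ginv n (g z).
Proof.
case: n => [k|[|k]]; first by rewrite int_S; exact: iterSr.
  by rewrite int_N0 /= c1.
rewrite int_NS; transitivity (iter k.+2 ginv (g z)) => //; by rewrite iterSr c1.
Qed.

Lemma iterzS' n z : iterz g ginv (n + 1) z = g (iterz g ginv n z).
Proof.
case: n => [k|[|k]]; first by rewrite int_S.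
  by rewrite int_N0 /= c2.
by rewrite int_NS [in RHS]/= c2.
Qed.
End Iter.

Section Main.
Context {R : realType} {d0 : measure_display} {X : measurableType d0}
  (dist : X -> X -> R) (mu : {measure set X -> \bar R}) (f finv : X -> X).
Context (hm : is_metric dist) (cX : dcompact dist [set: X])
  (hb : is_borel dist) (hf : is_homeo dist f finv).

Lemma open_meas A : dopen dist A -> measurable A.
Proof. by move=> oA; rewrite hb; apply: sub_sigma_algebra. Qed.

Lemma closed_meas A : dopen dist (~` A) -> measurable A.
Proof. by move=> oA; rewrite -(setCK A); apply: measurableC; apply: open_meas. Qed.

Definition S (F : int -> X -> X) (a : int -> X) (eps : R) : set X :=
  [set y | forall n, dist (F n y) (a n) <= eps].

Lemma notS F a eps y : ~ S F a eps y -> exists n, eps < dist (F n y) (a n).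
Proof.
move=> /existsNP [n /negP h]; exists n; by rewrite ltNge.
Qed.

Lemma S_closed F a eps : (forall n, dcont dist (F n)) -> dopen dist (~` S F a eps).
Proof.
move=> cF p /notS [n hn].
have [r hr H] := cF n p (dist (F n p) (a n) - eps) ltac:(by rewrite subr_gt0).
exists r => // q hq hS; have := hS n; have := H q hq.
have := d_tri dist hm (F n p) (F n q) (a n); move=> ? ? ?; lra.
Qed.

Definition Fi n := iterz f finv n.
Definition Hf (g ginv : X -> X) (e' : R) (z : X) : set X :=
  S Fi (fun n => iterz g ginv n z) e'.

Lemma cFi n : dcont dist (Fi n).
Proof. by case: hf => _ _ c1 c2; apply: dcont_iterz. Qed.

Lemma stab (x : X) (c : R) (hc : forall z, oball dist x c z -> mu (Gamma dist f finv x c z) = 0%E)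
  g ginv (hg : is_homeo dist g ginv) del e e' :
  0 < del -> del <= c -> 0 < e' -> 4 * e' <= c -> e' <= e ->
  stab_H dist mu f g ginv x e del (Hf g ginv e').
Proof.
move=> hdel hdc he' hec hee.
have [gc1 gc2 cg cgi] := hg.
have [fc1 fc2 cf cfi] := hf.
have cG : forall n, dcont dist (iterz g ginv n) by move=> n; apply: dcont_iterz.
set Z := dclosure dist (Defs.orbit g ginv x).
split.
- split; last first.
    move=> z _; apply: (closed_compact dist _ cX); exact: S_closed cFi.
  move=> z [Zz _] O oO HO.
  have [|gam hgam Hgam] := @key _ _ dist hm cX Fi (fun n => iterz g ginv n) cFi cG e' z O oO.
    by move=> y nOy; apply: notS => hy; apply: nOy; apply: HO.
  exists gam => // w Zw hw y hy; apply: contrapT => nOy.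
  have [n hn] := Hgam w ltac:(by rewrite d_sym) y nOy.
  by have := hy n; rewrite leNgt hn.
- apply: closed_meas => p ndom.
  have [Zp|nZ] := pselect (Z p); last first.
    have [r hr h] := dclosure_closed dist hm (Defs.orbit g ginv x) p nZ.
    by exists r => // q hq [Zq _]; apply: (h q hq).
  have Hp0 : forall y, ~ set0 y -> exists n, e' < dist (Fi n y) (iterz g ginv n p).
    move=> y _; apply: notS => hy; apply: ndom; split => //; by exists y.
  have [gam hgam Hgam] := @key _ _ dist hm cX Fi (fun n => iterz g ginv n) cFi cG e' p set0
     ltac:(by move=> ? []) Hp0.
  exists gam => // w hw [_ [y hy]].
  have [n hn] := Hgam w hw y id.
  by have := hy n; rewrite leNgt hn.
- move=> z [hz Zz].
  have [[w hw]|nH] := pselect (exists w, Hf g ginv e' z w); last first.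
    suff -> : Hf g ginv e' z = set0 by rewrite measure0.
    by apply/seteqP; split => // y hy; apply: nH; exists y.
  have hxw : forall y, Hf g ginv e' z y -> oball dist x c y.
    move=> y hy; have := hy 0; rewrite /Fi /= => hyz.
    rewrite /oball /= in hz *; have := d_tri dist hm x z y.
    rewrite (d_sym dist hm z y); move=> ?; lra.
  have sub : Hf g ginv e' z `<=` Gamma dist f finv x c w.
    move=> y hy; split; first exact: hxw.
    move=> n; have := hy n; have := hw n.
    have := d_tri dist hm (Fi n y) (iterz g ginv n z) (Fi n w).
    rewrite (d_sym dist hm (iterz g ginv n z)) /Fi; move=> ? ? ?; lra.
  apply/eqP; rewrite eq_le measure_ge0 andbT -(hc w (hxw w hw)).
  apply: le_measure => //; rewrite inE.
    by apply: closed_meas; apply: S_closed cFi.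
  apply: measurableI; first by apply: open_meas; apply: oball_open.
  by apply: closed_meas; apply: S_closed cFi.
- move=> z _ y hy; have := hy 0; rewrite /Fi /cball /= (d_sym dist hm) => ?; lra.
- move=> z _; apply/seteqP; split.
    move=> _ [y hy <-] n; have := hy (n + 1).
    by rewrite /Fi (iterzS _ _ fc1) (iterzS _ _ gc1).
  move=> y hy; exists (finv y); last by rewrite fc2.
  move=> n; rewrite -[n](subrK 1) /Fi (iterzS _ _ fc1) (iterzS _ _ gc1) fc2.
  exact: hy.
Qed.

Lemma dom_ne (x : X) g ginv (hg : is_homeo dist g ginv) del ds e' B :
  del < ds -> (forall y, dist (f y) (g y) <= del) ->
  (forall xs : int -> X, pseudo_orbit dist f ds xs ->
        (B `&` oball dist x ds) (xs 0) -> traced dist f finv e' xs) ->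
  forall z, B z -> oball dist x ds z -> exists y, Hf g ginv e' z y.
Proof.
move=> hds hgf hB z Bz bz.
have [gc1 gc2 _ _] := hg.
have [|//|y hy] := hB (fun n => iterz g ginv n z).
  move=> n /=; rewrite (iterzS' _ _ gc2); have := hgf (iterz g ginv n z).
  move=> ?; lra.
exists y => n; rewrite /Fi; exact/ltW/hy.
Qed.

End Main.

Theorem theorem3p9 (R : realType) (d0 : measure_display) (X : measurableType d0)
  (dist : X -> X -> R) (mu : {measure set X -> \bar R}) (f finv : X -> X) (x : X) :
  is_metric dist -> dcompact dist [set: X] -> is_borel dist ->
  is_homeo dist f finv -> (0 < mu [set: X])%E ->
  unif_expansive_pt dist mu f finv x ->
  top_stable_pt dist mu f x /\
  (shadowable_pt dist mu f finv x -> strong_top_stable_pt dist mu f x).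
Proof.
move=> hm cX hb hf hmu [c hc0 hc].
have mk : forall e, 0 < e -> exists e', [/\ 0 < e', 4 * e' <= c & e' <= e].
  move=> e he; exists (Order.min e (c / 4)); split.
  - by rewrite lt_min he divr_gt0.
  - have : Order.min e (c / 4) <= c / 4 by rewrite ge_min lexx orbT.
    move=> ?; lra.
  - by rewrite ge_min lexx.
split.
  move=> e he; have [e' [he' hec hee]] := mk e he.
  exists c => // g ginv hg _; exists (Hf dist f finv g ginv e').
  exact: (stab dist mu f finv hm cX hb hf x c hc g ginv hg c e e' hc0 (lexx c) he' hec hee).
move=> hsh e he; have [e' [he' hec hee]] := mk e he.
have [ds hds [B [mB mB0 hB]]] := hsh e' he'.
set del := Order.min c (ds / 2).
have hdel : 0 < del by rewrite lt_min hc0 divr_gt0.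
have [hdc hdds] : del <= c /\ del <= ds / 2.
  by have := lexx del; rewrite {2}/del le_min => /andP.
exists del => //; exists B; split => // g ginv hg hgf.
have st := stab dist mu f finv hm cX hb hf x c hc g ginv hg del e e' hdel hdc he' hec hee.
exists (Hf dist f finv g ginv e'); split => //=.
case: (st) => _ mdom _ _ _.
apply: le_measure; rewrite ?inE.
- exact: measurableC.
- apply: measurableC; apply: measurableI; first apply: measurableI => //.
    by apply: (open_meas dist hb); apply: oball_open.
  by apply: (closed_meas dist hb); apply: dclosure_closed.
- move=> p ndom [[Bp bp] Zp]; apply: ndom; split => //.
  have bp' : oball dist x ds p by rewrite /oball /= in bp *; lra.
  have := @dom_ne _ _ _ dist f finv x g ginv hg del ds e' B _ hgf hB p Bp bp'; apply.
  lra.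
Qed.
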